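(* Fix $p,r\in(0,1/36)$ with $\log p/\log r$ irrational, and let $h=1/2$, $a=1/3$. For $q\in(0,1/36)$ let $\mathcal S_q=\{S_1,\dots,S_6\}$ be the system on $\mathbb R$ given by $S_1(x)=px$, $S_2(x)=a+rx$, $S_3(x)=h-qx$, $S_4(x)=h-r+rx$, $S_5(x)=1-a-rx$, $S_6(x)=1-r+rx$, with attractor $K=K(q)$ and pieces $K_i=S_i(K)$. Then for Lebesgue almost all $q\in(0,1/36)$: $K_3\cap K_4=\{1/2\}$, $K_i\cap K_j=\varnothing$ for all other pairs $i\ne j$, and $\mathcal S_q$ does not satisfy the Weak Separation Property.
   Context: The attractor $K$ is the unique nonempty compact set with $K=\bigcup_{i=1}^6S_i(K)$. For a system $\{S_1,\dots,S_m\}$ of contracting similarities of $\mathbb R$, let $\mathcal F=\{S_{\mathbf i}^{-1}S_{\mathbf j}:\mathbf i,\mathbf j\in I^*\}$, where $I^*$ is the set of finite words over $\{1,\dots,m\}$ and $S_{j_1\dots j_k}=S_{j_1}\circ\dots\circ S_{j_k}$; the system satisfies the Weak Separation Property if $\mathrm{Id}\notin\overline{\mathcal F\setminus\{\mathrm{Id}\}}$, the closure taken in the space of affine maps of $\mathbb R$ with the topology of convergence of coefficients. *)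

(* Defs.v *)
From Stdlib Require Import Reals Lra List ZArith.
Import ListNotations.
From Stdlib Require Export Rtopology.
Open Scope R_scope.

Definition aff := (R * R)%type.
Definition app (f : aff) (x : R) : R := fst f * x + snd f.
Definition idA : aff := (1, 0).
Definition comp (f g : aff) : aff := (fst f * fst g, fst f * snd g + snd f).
Definition invA (f : aff) : aff := (/ fst f, - (snd f / fst f)).

(* S_{j1...jk} = S_{j1} o ... o S_{jk}; a word is the list of its letters (maps of the system). *)
Definition word_map (w : list aff) : aff := fold_right comp idA w.

Definition is_word (S : list aff) (w : list aff) : Prop := Forall (fun g => In g S) w.

Definition in_F (S : list aff) (f : aff) : Prop :=
  exists wi wj, is_word S wi /\ is_word S wj /\ f = comp (invA (word_map wi)) (word_map wj).

(* Weak Separation Property: Id is not in the closure of F \ {Id}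
   (topology of convergence of coefficients). *)
Definition WSP (S : list aff) : Prop :=
  ~ (forall eps, 0 < eps ->
       exists f, in_F S f /\ f <> idA /\ Rabs (fst f - 1) < eps /\ Rabs (snd f) < eps).

Definition image (g : aff) (K : R -> Prop) : R -> Prop :=
  fun y => exists x, K x /\ y = app g x.

Definition is_attractor (S : list aff) (K : R -> Prop) : Prop :=
  compact K /\ (exists x, K x) /\
  (forall y, K y <-> exists g, In g S /\ image g K y).

Definition lebesgue_null (E : R -> Prop) : Prop :=
  forall eps, 0 < eps ->
    exists a b : nat -> R,
      (forall n, a n <= b n) /\
      (forall N, sum_f_R0 (fun n => b n - a n) N <= eps) /\
      (forall x, E x -> exists n, a n < x < b n).

Definition ae_on (lo hi : R) (P : R -> Prop) : Prop :=
  lebesgue_null (fun q => lo < q < hi /\ ~ P q).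

Definition hh : R := 1/2.
Definition aa : R := 1/3.

(* The system S_q = {S_1,...,S_6} (list positions 0..5 correspond to S_1..S_6) *)
Definition sysS (p r q : R) : list aff :=
  [ (p, 0);
    (r, aa);
    (- q, hh);
    (r, hh - r);
    (- r, 1 - aa);
    (r, 1 - r) ]%list.

Definition piece (S : list aff) (K : R -> Prop) (i : nat) : R -> Prop :=
  image (nth i S idA) K.

(* Main.v *)
From Stdlib Require Import Reals List ZArith Lra Lia ClassicalEpsilon Classical Rtopology Cantor.
Require Import Defs.
Import ListNotations.
Open Scope R_scope.


Lemma app_comp f g x : app (comp f g) x = app f (app g x).
Proof. unfold app, comp; simpl; ring. Qed.

Definition Sq p r q i := nth i (sysS p r q) idA.

Lemma In_sys p r q g : In g (sysS p r q) -> exists i, (i<6)%nat /\ g = Sq p r q i.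
Proof.
  intro H. destruct (In_nth _ _ idA H) as [i [Hi E]]. exists i. split; [exact Hi| now rewrite <- E].
Qed.

Lemma Sq_in p r q i : (i < 6)%nat -> In (Sq p r q i) (sysS p r q).
Proof. intro H. unfold Sq. apply nth_In. exact H. Qed.

Lemma att_dec p r q K : is_attractor (sysS p r q) K -> forall y, K y ->
  exists i z, (i < 6)%nat /\ K z /\ y = app (Sq p r q i) z.
Proof.
  intros [_ [_ H]] y Hy. apply H in Hy. destruct Hy as [g [Hg [z [Hz E]]]].
  destruct (In_sys _ _ _ _ Hg) as [i [Hi ->]]. exists i, z. auto.
Qed.

Lemma att_img p r q K : is_attractor (sysS p r q) K -> forall i z, (i < 6)%nat -> K z ->
  K (app (Sq p r q i) z).
Proof.
  intros [_ [_ H]] i z Hi Hz. apply H. exists (Sq p r q i). split. now apply Sq_in.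
  exists z; auto.
Qed.

Ltac six i := destruct i as [|[|[|[|[|[|i]]]]]]; [..|exfalso; lia].

Lemma Sq_step p r q i e x : 0 < p < 1/36 -> 0 < r < 1/36 -> 0 <= q <= 1/36 -> (i < 6)%nat ->
  0 <= e -> -e <= x <= 1 + e -> - (e/36) <= app (Sq p r q i) x <= 1 + e/36.
Proof.
  intros Hp Hr Hq Hi He Hx. unfold Sq, app, aa, hh. six i; simpl.
  all: unfold aa, hh; split; nra.
Qed.

Lemma K01 p r q K : 0 < p < 1/36 -> 0 < r < 1/36 -> 0 <= q <= 1/36 ->
  is_attractor (sysS p r q) K -> forall y, K y -> 0 <= y <= 1.
Proof.
  intros Hp Hr Hq HK.
  destruct (compact_P1 _ (proj1 HK)) as [m [M HmM]].
  set (e0 := Rabs m + Rabs M).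
  assert (He0 : 0 <= e0) by (unfold e0; pose proof (Rabs_pos m); pose proof (Rabs_pos M); lra).
  assert (Hk : forall k y, K y -> - (e0 * (/36)^k) <= y <= 1 + e0 * (/36)^k).
  { induction k; intros y Hy.
    - simpl. destruct (HmM y Hy). unfold e0. pose proof (Rabs_pos m); pose proof (Rabs_pos M).
      pose proof (Rle_abs M); pose proof (Rle_abs (-m)); rewrite Rabs_Ropp in *. lra.
    - destruct (att_dec _ _ _ _ HK y Hy) as [i [z [Hi [Hz ->]]]].
      pose proof (IHk z Hz).
      assert (0 <= (/36)^k) by (apply pow_le; lra).
      pose proof (Sq_step p r q i (e0 * (/36)^k) z Hp Hr Hq Hi ltac:(nra) H).
      simpl. replace (e0 * (/ 36 * (/ 36) ^ k)) with (e0 * (/36) ^ k / 36) by (field).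
      exact H1. }
  intros y Hy. split.
  - destruct (Rle_or_lt 0 y) as [|Hlt]; [auto|exfalso].
    destruct (pow_lt_1_zero (/36) ltac:(rewrite Rabs_pos_eq; lra) ((-y)/(e0+1)) ltac:(apply Rdiv_lt_0_compat; lra)) as [N HN].
    specialize (HN N (le_n _)). rewrite Rabs_pos_eq in HN by (apply pow_le; lra).
    specialize (Hk N y Hy). assert (0 <= (/36)^N) by (apply pow_le; lra).
    apply (Rmult_lt_compat_r (e0+1)) in HN; [|lra]. unfold Rdiv in HN. rewrite Rmult_assoc, Rinv_l in HN by lra. nra.
  - destruct (Rle_or_lt y 1) as [|Hlt]; [auto|exfalso].
    destruct (pow_lt_1_zero (/36) ltac:(rewrite Rabs_pos_eq; lra) ((y-1)/(e0+1)) ltac:(apply Rdiv_lt_0_compat; lra)) as [N HN].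
    specialize (HN N (le_n _)). rewrite Rabs_pos_eq in HN by (apply pow_le; lra).
    specialize (Hk N y Hy). assert (0 <= (/36)^N) by (apply pow_le; lra).
    apply (Rmult_lt_compat_r (e0+1)) in HN; [|lra]. unfold Rdiv in HN. rewrite Rmult_assoc, Rinv_l in HN by lra. nra.
Qed.

Lemma closed_lim K x : closed_set K -> (forall d, 0 < d -> exists y, K y /\ Rabs (y - x) < d) -> K x.
Proof.
  intros HC H. destruct (classic (K x)) as [|Hn]; [auto|exfalso].
  destruct (HC x Hn) as [del Hd]. destruct (H del (cond_pos del)) as [y [Hy Hyd]].
  apply (Hd y); auto.
Qed.

Lemma K_0 p r q K : 0 < p < 1/36 -> 0 < r < 1/36 -> 0 <= q <= 1/36 ->
  is_attractor (sysS p r q) K -> K 0 /\ K 1.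
Proof.
  intros Hp Hr Hq HK. pose proof HK as [Hc [[y0 Hy0] _]].
  pose proof (compact_P2 _ Hc) as HC.
  pose proof (K01 _ _ _ _ Hp Hr Hq HK y0 Hy0) as Hy01.
  split; apply closed_lim; auto; intros d Hd.
  - assert (Hn : forall n, K (p^n * y0)).
    { induction n. simpl. now rewrite Rmult_1_l.
      pose proof (att_img _ _ _ _ HK 0 _ ltac:(lia) IHn). unfold Sq, app in H; simpl in H.
      replace (p ^ S n * y0) with (p * (p ^ n * y0) + 0) by (simpl; ring). exact H. }
    destruct (pow_lt_1_zero p ltac:(rewrite Rabs_pos_eq; lra) d Hd) as [N HN].
    exists (p^N * y0). split; auto. specialize (HN N (le_n _)).
    rewrite Rminus_0_r, Rabs_mult, (Rabs_pos_eq y0) by lra.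
    pose proof (Rabs_pos (p^N)). nra.
  - assert (Hn : forall n, K (1 + r^n * (y0 - 1))).
    { induction n. simpl. now replace (1 + 1 * (y0 - 1)) with y0 by ring.
      pose proof (att_img _ _ _ _ HK 5 _ ltac:(lia) IHn). unfold Sq, app in H; simpl in H.
      replace (1 + r ^ S n * (y0 - 1)) with (r * (1 + r ^ n * (y0 - 1)) + (1 - r)) by (simpl; ring). exact H. }
    destruct (pow_lt_1_zero r ltac:(rewrite Rabs_pos_eq; lra) d Hd) as [N HN].
    exists (1 + r^N * (y0 - 1)). split; auto. specialize (HN N (le_n _)).
    replace (1 + r ^ N * (y0 - 1) - 1) with (r^N * (y0-1)) by ring.
    rewrite Rabs_mult. assert (Rabs (y0 - 1) <= 1) by (apply Rabs_le; lra).
    pose proof (Rabs_pos (r^N)). pose proof (Rabs_pos (y0-1)). nra.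
Qed.


Lemma part_a p r q K : 0 < p < 1/36 -> 0 < r < 1/36 -> 0 < q < 1/36 ->
  is_attractor (sysS p r q) K -> 
  piece (sysS p r q) K 2 (1/2) /\ piece (sysS p r q) K 3 (1/2).
Proof.
  intros Hp Hr Hq HK. destruct (K_0 p r q K Hp Hr ltac:(lra) HK) as [H0 H1].
  split.
  - exists 0. split; auto. simpl; unfold app, hh; simpl; lra.
  - exists 1. split; auto. simpl; unfold app, hh; simpl; lra.
Qed.

Lemma part_b p r q K : 0 < p < 1/36 -> 0 < r < 1/36 -> 0 < q < 1/36 ->
  is_attractor (sysS p r q) K -> 
  (forall i j : nat, (i < 6)%nat -> (j < 6)%nat -> i <> j ->
         ~ ((i = 2%nat /\ j = 3%nat) \/ (i = 3%nat /\ j = 2%nat)) ->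
         forall y, ~ (piece (sysS p r q) K i y /\ piece (sysS p r q) K j y)).
Proof.
  intros Hp Hr Hq HK i j Hi Hj Hij Hn y [[x1 [Hx1 E1]] [x2 [Hx2 E2]]].
  pose proof (K01 p r q K Hp Hr ltac:(lra) HK x1 Hx1).
  pose proof (K01 p r q K Hp Hr ltac:(lra) HK x2 Hx2).
  six i; six j; simpl in E1, E2; unfold app, aa, hh in E1, E2; simpl in E1, E2;
  try (exfalso; apply Hij; reflexivity); try (apply Hn; tauto); nra.
Qed.


Definition inS (al be x : R) := exists n j : nat, x = INR n * al - INR j * be.

Lemma inS_add al be x y : inS al be x -> inS al be y -> inS al be (x + y).
Proof.
  intros [n [j ->]] [n' [j' ->]]. exists (n+n')%nat, (j+j')%nat. rewrite !plus_INR. ring.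
Qed.

Lemma inS_mul al be k x : inS al be x -> inS al be (INR k * x).
Proof.
  intros [n [j ->]]. exists (k*n)%nat, (k*j)%nat. rewrite !mult_INR. ring.
Qed.

Lemma nat_floor x : 0 <= x -> exists k : nat, INR k <= x < INR k + 1.
Proof.
  intros Hx. destruct (archimed x) as [H1 H2].
  assert (Hz : (0 < up x)%Z) by (apply lt_0_IZR; lra).
  exists (Z.to_nat (up x - 1)). rewrite INR_IZR_INZ, Z2Nat.id by lia.
  rewrite minus_IZR. simpl. lra.
Qed.

Section Dens.
Variables al be : R.
Hypothesis Hal : 0 < al.
Hypothesis Hbe : 0 < be.
Hypothesis irr : forall n j : nat, INR n * al = INR j * be -> n = 0%nat /\ j = 0%nat.

Lemma small eps : 0 < eps ->
  (exists x, inS al be x /\ 0 < x < eps) \/ (exists x, inS al be x /\ - eps < x < 0).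
Proof.
  intros He. apply NNPP. intro Hn. apply not_or_and in Hn. destruct Hn as [HA HB].
  assert (Hs : forall N : nat, exists n j n' j' : nat,
     0 < INR n * al - INR j * be /\ 0 < INR j' * be - INR n' * al /\
     (INR n * al - INR j * be) + (INR j' * be - INR n' * al) <= al + be - INR N * eps).
  { induction N.
    - exists 1%nat, 0%nat, 0%nat, 1%nat. simpl. lra.
    - destruct IHN as [n [j [n' [j' [Hu [Hv Hsum]]]]]].
      set (u := INR n * al - INR j * be) in *. set (v := INR j' * be - INR n' * al) in *.
      assert (Hue : eps <= u).
      { destruct (Rlt_or_le u eps) as [Hl|]; auto. exfalso; apply HA. exists u. split; [exists n, j; auto|lra]. }
      assert (Hve : eps <= v).
      { destruct (Rlt_or_le v eps) as [Hl|]; auto. exfalso; apply HB. exists (-v). split; [exists n', j'; unfold v; ring|lra]. }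
      assert (Hne : u <> v).
      { intro E. assert (E' : INR (n+n') * al = INR (j+j') * be) by (rewrite !plus_INR; unfold u, v in E; lra).
        apply irr in E'. assert (n = 0%nat) by lia. subst n. unfold u in Hu. simpl in Hu.
        pose proof (pos_INR j). nra. }
      rewrite S_INR.
      destruct (Rlt_or_le v u).
      + exists (n+n')%nat, (j+j')%nat, n', j'. rewrite !plus_INR. repeat split; [unfold u,v in *; lra| exact Hv | unfold u, v in *; lra].
      + exists n, j, (n+n')%nat, (j+j')%nat. rewrite !plus_INR. repeat split; [exact Hu| unfold u,v in *; lra | unfold u, v in *; lra]. }
  destruct (nat_floor ((al + be)/eps) ltac:(apply Rlt_le, Rdiv_lt_0_compat; lra)) as [N [_ HN]].
  destruct (Hs (N+1)%nat) as [n [j [n' [j' [Hu [Hv Hsum]]]]]].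
  rewrite plus_INR in Hsum. simpl in Hsum.
  apply (Rmult_lt_compat_r eps) in HN; [|lra]. unfold Rdiv in HN. rewrite Rmult_assoc, Rinv_l in HN by lra.
  lra.
Qed.

Lemma small_pos eps : 0 < eps -> exists x, inS al be x /\ 0 < x < eps.
Proof.
  intros He. destruct (small eps He) as [H|[d [[n [j Hd]] Hdr]]]; [exact H|].
  set (D := -d).
  destruct (nat_floor (al / D) ltac:(apply Rlt_le, Rdiv_lt_0_compat; unfold D; lra)) as [k [Hk1 Hk2]].
  exists (al + INR k * d). split.
  - apply inS_add. exists 1%nat, 0%nat. simpl; ring. apply inS_mul. exists n, j; auto.
  - assert (HD : 0 < D) by (unfold D; lra).
    apply (Rmult_le_compat_r D) in Hk1; [|lra]. apply (Rmult_lt_compat_r D) in Hk2; [|lra].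
    unfold Rdiv in *. rewrite Rmult_assoc, Rinv_l, Rmult_1_r in Hk1, Hk2 by lra.
    assert (al + INR k * d <> 0).
    { intro E. assert (E' : INR (1 + k*n) * al = INR (k*j) * be).
      { rewrite plus_INR, !mult_INR. simpl. rewrite Hd in E. lra. }
      apply irr in E'. lia. }
    unfold D in *. split; [|nra]. destruct (Rle_lt_or_eq_dec 0 (al + INR k * d)); [nra|auto|].
    exfalso; auto.
Qed.

Lemma small_neg eps : 0 < eps -> exists x, inS al be x /\ - eps < x < 0.
Proof.
  intros He. destruct (small eps He) as [[d [[n [j Hd]] Hdr]]|H]; [|exact H].
  destruct (nat_floor (be / d) ltac:(apply Rlt_le, Rdiv_lt_0_compat; lra)) as [k [Hk1 Hk2]].
  exists (INR k * d - be). split.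
  - unfold Rminus. apply inS_add. apply inS_mul. exists n, j; auto. exists 0%nat, 1%nat. simpl; ring.
  - apply (Rmult_le_compat_r d) in Hk1; [|lra]. apply (Rmult_lt_compat_r d) in Hk2; [|lra].
    unfold Rdiv in *. rewrite Rmult_assoc, Rinv_l, Rmult_1_r in Hk1, Hk2 by lra.
    assert (INR k * d - be <> 0).
    { intro E. assert (E' : INR (k*n) * al = INR (k*j+1) * be).
      { rewrite plus_INR, !mult_INR. simpl. rewrite Hd in E. lra. }
      apply irr in E'. lia. }
    split; [nra|]. destruct (Rle_lt_or_eq_dec (INR k * d - be) 0); [nra|auto|].
    exfalso; auto.
Qed.

Lemma dens_pos y d : 0 <= y -> 0 < d -> exists x, inS al be x /\ y < x < y + d.
Proof.
  intros Hy Hd. destruct (small_pos d Hd) as [e [He [He1 He2]]].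
  destruct (nat_floor (y / e) ltac:(apply Rmult_le_pos; [lra| apply Rlt_le, Rinv_0_lt_compat; lra])) as [k [Hk1 Hk2]].
  exists (INR (k+1) * e). split. apply inS_mul; auto.
  apply (Rmult_le_compat_r e) in Hk1; [|lra]. apply (Rmult_lt_compat_r e) in Hk2; [|lra].
  unfold Rdiv in *. rewrite Rmult_assoc, Rinv_l, Rmult_1_r in Hk1, Hk2 by lra.
  rewrite plus_INR; simpl. split; nra.
Qed.

Lemma dens y d : 0 < d -> exists x, inS al be x /\ y < x < y + d.
Proof.
  intros Hd. destruct (Rle_or_lt 0 y) as [Hy|Hy]. now apply dens_pos.
  destruct (small_neg 1 ltac:(lra)) as [e [He [He1 He2]]].
  destruct (nat_floor (y / e)) as [k [Hk1 Hk2]].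
  { unfold Rdiv. apply Rlt_le. replace (y * / e) with ((-y) * / (-e)) by (field; lra).
    apply Rmult_lt_0_compat; [lra|apply Rinv_0_lt_compat; lra]. }
  assert (Hke : INR (k+1) * e < y).
  { rewrite plus_INR; simpl. apply (Rmult_lt_compat_r (-e)) in Hk2; [|lra].
    unfold Rdiv in Hk2. replace (y * / e * - e) with (-y) in Hk2 by (field; lra). lra. }
  destruct (dens_pos (y - INR (k+1) * e) d ltac:(lra) Hd) as [x [Hx1 Hx2]].
  exists (x + INR (k+1) * e). split. apply inS_add; auto. apply inS_mul; auto. lra.
Qed.
End Dens.


Lemma comp_assoc f g h : comp f (comp g h) = comp (comp f g) h.
Proof. destruct f, g, h; unfold comp; simpl; f_equal; ring. Qed.

Lemma wm_app l1 l2 : word_map (l1 ++ l2) = comp (word_map l1) (word_map l2).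
Proof.
  induction l1; simpl.
  - destruct (word_map l2); unfold comp, idA; simpl; f_equal; ring.
  - rewrite IHl1. apply comp_assoc.
Qed.


Lemma wm_rep1 p n : word_map (repeat (p, 0) n) = (p^n, 0).
Proof. induction n; simpl. reflexivity. rewrite IHn. unfold comp; simpl; f_equal; ring. Qed.

Lemma wm_rep6 r n : word_map (repeat (r, 1 - r) n) = (r^n, 1 - r^n).
Proof. induction n; simpl. unfold idA; f_equal; ring. rewrite IHn. unfold comp; simpl; f_equal; ring. Qed.

Lemma notWSP p r q : 0 < p < 1/36 -> 0 < r < 1/36 -> 0 < q ->
  ~ (exists m n : Z, n <> 0%Z /\ ln p / ln r = IZR m / IZR n) ->
  ~ WSP (sysS p r q).
Proof.
  intros Hp Hr Hq Hirr.
  assert (Hlp : ln p < 0) by (rewrite <- ln_1; apply ln_increasing; lra).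
  assert (Hlr : ln r < 0) by (rewrite <- ln_1; apply ln_increasing; lra).
  set (al := - ln p). set (be := - ln r).
  assert (irr : forall n j : nat, INR n * al = INR j * be -> n = 0%nat /\ j = 0%nat).
  { intros n j E. destruct n as [|n].
    - simpl in E. assert (INR j = 0) by (unfold be in E; nra).
      split; auto. apply INR_eq. simpl. auto.
    - exfalso. apply Hirr. exists (Z.of_nat j), (Z.of_nat (S n)). split; [lia|].
      rewrite <- !INR_IZR_INZ. pose proof (pos_INR n). rewrite S_INR in *.
      unfold al, be in E. field_simplify_eq; [lra|split; lra]. }
  unfold WSP. intro H. apply H. intros eps Heps.
  set (eta := Rmin eps (3*r*eps)).
  assert (Heta : 0 < eta) by (unfold eta; apply Rmin_glb_lt; nra).
  assert (Hl1 : 0 < ln (1 + eta)) by (rewrite <- ln_1; apply ln_increasing; lra).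
  destruct (dens al be ltac:(unfold al; lra) ltac:(unfold be; lra) irr (ln q + be) (ln (1+eta)) Hl1)
    as [x [[n [m Hx]] [Hx1 Hx2]]].
  set (t := r^(m+1) / (q * p^n)).
  assert (Hpn : 0 < p^n) by (apply pow_lt; lra).
  assert (Hrm : 0 < r^(m+1)) by (apply pow_lt; lra).
  assert (Ht0 : 0 < t) by (unfold t; apply Rdiv_lt_0_compat; nra).
  assert (Hlt : ln t = x - be - ln q).
  { assert (0 < q * p^n) by nra.
    unfold t, Rdiv. rewrite ln_mult; [|auto|apply Rinv_0_lt_compat; auto].
    rewrite ln_Rinv, ln_mult, !ln_pow by lra.
    rewrite Hx. unfold al, be. rewrite plus_INR. simpl. ring. }
  assert (Ht1 : 1 < t) by (apply ln_lt_inv; [lra|lra|rewrite ln_1; lra]).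
  assert (Ht2 : t < 1 + eta) by (apply ln_lt_inv; lra).
  set (wi := (- q, hh) :: repeat (p, 0) n ++ [(r, aa)]).
  set (wj := (r, hh - r) :: repeat (r, 1 - r) m ++ [(- r, 1 - aa)]).
  exists (comp (invA (word_map wi)) (word_map wj)).
  assert (Hf : comp (invA (word_map wi)) (word_map wj) = (t, (t - 1) / (3 * r))).
  { unfold wi, wj. simpl word_map at 1. simpl word_map at 2. rewrite !wm_app, wm_rep1, wm_rep6.
    unfold comp, invA, idA, t, hh, aa; simpl. rewrite pow_add. simpl.
    f_equal; field; repeat split; lra. }
  rewrite Hf. simpl. repeat split.
  - exists wi, wj. repeat split; auto.
    + unfold wi. constructor. simpl; tauto. apply Forall_app. split.
      apply Forall_forall. intros y Hy. apply repeat_spec in Hy. subst. simpl; tauto.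
      constructor; [simpl; tauto|constructor].
    + unfold wj. constructor. simpl; tauto. apply Forall_app. split.
      apply Forall_forall. intros y Hy. apply repeat_spec in Hy. subst. simpl; tauto.
      constructor; [simpl; tauto|constructor].
  - unfold idA. intro E. injection E. lra.
  - rewrite Rabs_pos_eq by lra. pose proof (Rmin_l eps (3*r*eps)). fold eta in H0. lra.
  - rewrite Rabs_pos_eq. pose proof (Rmin_r eps (3*r*eps)). fold eta in H0.
    apply (Rmult_lt_reg_r (3*r)). lra. unfold Rdiv. rewrite Rmult_assoc, Rinv_l by lra. lra.
    apply Rmult_le_pos; [lra|]. apply Rlt_le, Rinv_0_lt_compat; lra.
Qed.


Definition wmap p r q (w : list nat) : aff := fold_right (fun i f => comp (Sq p r q i) f) idA w.
Definition Cw p r q w := app (wmap p r q w) 0.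

Lemma Sq01 p r q i z : 0 < p < 1/36 -> 0 < r < 1/36 -> 0 <= q <= 1/36 -> 0 <= z <= 1 ->
  0 <= app (Sq p r q i) z <= 1.
Proof.
  intros Hp Hr Hq Hz. unfold Sq.
  destruct i as [|[|[|[|[|[|i]]]]]]; simpl; unfold app, aa, hh; simpl; try (split; nra).
  destruct i; simpl; lra.
Qed.

Lemma wmap01 p r q w z : 0 < p < 1/36 -> 0 < r < 1/36 -> 0 <= q <= 1/36 -> 0 <= z <= 1 ->
  0 <= app (wmap p r q w) z <= 1.
Proof.
  intros Hp Hr Hq Hz. induction w; simpl.
  - unfold app, idA; simpl; lra.
  - rewrite app_comp. now apply Sq01.
Qed.

Lemma wmap_scale p r q w c : 0 < p <= c -> 0 < r <= c -> 0 <= q <= c ->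
  Forall (fun i => (i < 6)%nat) w -> Rabs (fst (wmap p r q w)) <= c ^ (length w).
Proof.
  intros Hp Hr Hq Hw. induction Hw as [|i w Hi Hw IH]; simpl.
  - rewrite Rabs_R1. lra.
  - unfold comp; simpl. rewrite Rabs_mult.
    assert (Rabs (fst (Sq p r q i)) <= c).
    { unfold Sq. six i; simpl; rewrite ?Rabs_Ropp, Rabs_pos_eq; lra. }
    apply Rmult_le_compat; auto using Rabs_pos.
Qed.

Lemma app_diff f z : app f z - app f 0 = fst f * z.
Proof. unfold app; ring. Qed.

Lemma Cw_lip p r q1 q2 w : 0 < p < 1/36 -> 0 < r < 1/36 -> 0 <= q1 <= 1/36 -> 0 <= q2 <= 1/36 ->
  Rabs (Cw p r q2 w - Cw p r q1 w) <= 2 * Rabs (q2 - q1).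
Proof.
  intros Hp Hr H1 H2. unfold Cw. induction w as [|i w IH]; simpl.
  - unfold app, idA; simpl. rewrite Rminus_diag, Rabs_R0. pose proof (Rabs_pos (q2-q1)); lra.
  - rewrite !app_comp.
    pose proof (wmap01 p r q2 w 0 Hp Hr H2 ltac:(lra)).
    pose proof (wmap01 p r q1 w 0 Hp Hr H1 ltac:(lra)).
    set (a2 := app (wmap p r q2 w) 0) in *. set (a1 := app (wmap p r q1 w) 0) in *.
    pose proof (Rabs_pos (q2-q1)).
    unfold Sq. destruct i as [|[|[|[|[|[|i]]]]]]; simpl; unfold app; simpl.
    + replace (p * a2 + 0 - (p * a1 + 0)) with (p * (a2 - a1)) by ring.
      rewrite Rabs_mult, Rabs_pos_eq by lra. nra.
    + replace (r * a2 + aa - (r * a1 + aa)) with (r * (a2 - a1)) by ring.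
      rewrite Rabs_mult, Rabs_pos_eq by lra. nra.
    + replace (- q2 * a2 + hh - (- q1 * a1 + hh)) with (- ((q2 - q1) * a2) - q1 * (a2 - a1)) by ring.
      unfold Rminus at 1. eapply Rle_trans. apply Rabs_triang. rewrite !Rabs_Ropp, !Rabs_mult.
      rewrite (Rabs_pos_eq a2), (Rabs_pos_eq q1) by lra. nra.
    + replace (r * a2 + (hh - r) - (r * a1 + (hh - r))) with (r * (a2 - a1)) by ring.
      rewrite Rabs_mult, Rabs_pos_eq by lra. nra.
    + replace (- r * a2 + (1 - aa) - (- r * a1 + (1 - aa))) with (- (r * (a2 - a1))) by ring.
      rewrite Rabs_Ropp, Rabs_mult, Rabs_pos_eq by lra. nra.
    + replace (r * a2 + (1 - r) - (r * a1 + (1 - r))) with (r * (a2 - a1)) by ring.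
      rewrite Rabs_mult, Rabs_pos_eq by lra. nra.
    + destruct i; simpl; replace (1 * a2 + 0 - (1 * a1 + 0)) with (a2 - a1) by ring; exact IH.
Qed.

Fixpoint allwords (k : nat) : list (list nat) :=
  match k with
  | O => [[]]
  | S k => flat_map (fun w => map (fun i => i :: w) (seq 0 6)) (allwords k)
  end.

Lemma allwords_len k : length (allwords k) = (6 ^ k)%nat.
Proof.
  induction k; simpl; auto.
  assert (forall l : list (list nat), length (flat_map (fun w => map (fun i => i :: w) (seq 0 6)) l) = (6 * length l)%nat).
  { induction l as [|a l IHl]; simpl in *; auto. rewrite IHl. lia. }
  rewrite H, IHk. lia.
Qed.

Lemma allwords_in k w : length w = k -> Forall (fun i => (i < 6)%nat) w -> In w (allwords k).
Proof.
  revert w. induction k; intros w Hl Hw.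
  - destruct w; [simpl; auto| simpl in Hl; lia].
  - destruct w as [|i w]; [simpl in Hl; lia|]. inversion Hw; subst. simpl in Hl.
    simpl. apply in_flat_map. exists w. split. apply IHk; [lia|assumption].
    six i; simpl; tauto.
Qed.

Lemma K_words p r q K : is_attractor (sysS p r q) K -> forall k x, K x ->
  exists w, length w = k /\ Forall (fun i => (i < 6)%nat) w /\ exists z, K z /\ x = app (wmap p r q w) z.
Proof.
  intros HK k. induction k; intros x Hx.
  - exists []. repeat split; auto. exists x. split; auto. unfold app, idA; simpl; ring.
  - destruct (att_dec _ _ _ _ HK x Hx) as [i [z1 [Hi [Hz1 ->]]]].
    destruct (IHk z1 Hz1) as [w [Hl [Hw [z [Hz ->]]]]].
    exists (i :: w). repeat split; simpl; auto. exists z. split; auto. rewrite app_comp. reflexivity.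
Qed.


Section Dec.
Variables p r q : R.
Hypothesis Hp : 0 < p < 1/36.
Hypothesis Hr : 0 < r < 1/36.
Hypothesis Hq : 0 < q < 1/36.
Variable K : R -> Prop.
Hypothesis HK : is_attractor (sysS p r q) K.

Lemma Kin01 x : K x -> 0 <= x <= 1.
Proof. apply (K01 p r q K Hp Hr ltac:(lra) HK). Qed.

Lemma dec1 N : forall x, K x -> p^(S N) < x -> exists n x', K x' /\ x = p^n * x' /\ p < x'.
Proof.
  induction N; intros x Hx Hlt.
  - exists 0%nat, x. simpl in *. repeat split; auto; lra.
  - destruct (Rlt_or_le p x) as [H|H].
    + exists 0%nat, x. simpl; repeat split; auto; lra.
    + destruct (att_dec _ _ _ _ HK x Hx) as [i [z [Hi [Hz Ex]]]].
      pose proof (Kin01 z Hz).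
      assert (Hpz : 0 < p ^ S N) by (apply pow_lt; lra).
      unfold Sq in Ex. six i; simpl in Ex; unfold app, aa, hh in Ex; simpl in Ex; try (exfalso; nra).
      destruct (IHN z Hz) as [n [x' [Hx' [Ez Hp']]]].
      { simpl in Hlt. simpl. nra. }
      exists (S n), x'. repeat split; auto. rewrite Ex, Ez. simpl. ring.
Qed.

Lemma dec1' x : K x -> p < x -> 1/3 <= x.
Proof.
  intros Hx Hlt. destruct (att_dec _ _ _ _ HK x Hx) as [i [z [Hi [Hz Ex]]]].
  pose proof (Kin01 z Hz).
  unfold Sq in Ex. six i; simpl in Ex; unfold app, aa, hh in Ex; simpl in Ex; nra.
Qed.

Lemma dec6 N : forall x, K x -> r^(S N) < 1 - x -> exists m x', K x' /\ 1 - x = r^m * (1 - x') /\ r < 1 - x'.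
Proof.
  induction N; intros x Hx Hlt.
  - exists 0%nat, x. simpl in *. repeat split; auto; lra.
  - destruct (Rlt_or_le r (1 - x)) as [H|H].
    + exists 0%nat, x. simpl; repeat split; auto; lra.
    + destruct (att_dec _ _ _ _ HK x Hx) as [i [z [Hi [Hz Ex]]]].
      pose proof (Kin01 z Hz).
      assert (Hpz : 0 < r ^ S N) by (apply pow_lt; lra).
      unfold Sq in Ex. six i; simpl in Ex; unfold app, aa, hh in Ex; simpl in Ex; try (exfalso; nra).
      destruct (IHN z Hz) as [n [x' [Hx' [Ez Hp']]]].
      { simpl in Hlt. simpl. nra. }
      exists (S n), x'. repeat split; auto. rewrite Ex. simpl. replace (1 - (r*z + (1-r))) with (r * (1 - z)) by ring. rewrite Ez. ring.
Qed.

Lemma dec6' x : K x -> r < 1 - x -> 1/3 <= 1 - x.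
Proof.
  intros Hx Hlt. destruct (att_dec _ _ _ _ HK x Hx) as [i [z [Hi [Hz Ex]]]].
  pose proof (Kin01 z Hz).
  unfold Sq in Ex. six i; simpl in Ex; unfold app, aa, hh in Ex; simpl in Ex; nra.
Qed.

Lemma bad_decomp y : piece (sysS p r q) K 2 y -> piece (sysS p r q) K 3 y -> y <> 1/2 ->
  exists n m x' u', 1/3 <= x' <= 1 /\ 1/3 <= u' <= 1 /\ q * p^n * x' = r^(m+1) * u' /\ K x' /\ K (1 - u').
Proof.
  intros [x [Hx Ey]] [x2 [Hx2 Ey2]] Hy.
  simpl in Ey, Ey2. unfold app, hh in Ey, Ey2; simpl in Ey, Ey2.
  pose proof (Kin01 x Hx). pose proof (Kin01 x2 Hx2).
  assert (Hxp : 0 < x) by (destruct (Rle_lt_or_eq_dec 0 x); try lra; subst; exfalso; apply Hy; lra).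
  assert (Hx2p : 0 < 1 - x2) by nra.
  destruct (pow_lt_1_zero p ltac:(rewrite Rabs_pos_eq; lra) x Hxp) as [N1 HN1].
  specialize (HN1 (S N1) ltac:(lia)). rewrite Rabs_pos_eq in HN1 by (apply pow_le; lra).
  destruct (dec1 N1 x Hx HN1) as [n [x' [Hx' [Ex Hpx']]]].
  destruct (pow_lt_1_zero r ltac:(rewrite Rabs_pos_eq; lra) (1-x2) Hx2p) as [N2 HN2].
  specialize (HN2 (S N2) ltac:(lia)). rewrite Rabs_pos_eq in HN2 by (apply pow_le; lra).
  destruct (dec6 N2 x2 Hx2 HN2) as [m [x2' [Hx2' [Ex2 Hrx2']]]].
  exists n, m, x', (1 - x2'). pose proof (Kin01 x' Hx'). pose proof (Kin01 x2' Hx2').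
  pose proof (dec1' x' Hx' Hpx'). pose proof (dec6' x2' Hx2' Hrx2').
  repeat split; try lra.
  - rewrite pow_add. simpl. rewrite Rmult_1_r.
    replace (r ^ m * r * (1 - x2')) with (r * (r^m * (1 - x2'))) by ring. rewrite <- Ex2.
    rewrite Rmult_assoc, <- Ex. lra.
  - exact Hx'.
  - replace (1 - (1 - x2')) with x2' by ring. auto.
Qed.

End Dec.

Lemma near_word p r q K c k x : 0 < p < 1/36 -> 0 < r < 1/36 -> 0 < q < 1/36 ->
  p <= c -> r <= c -> q <= c ->
  is_attractor (sysS p r q) K -> K x ->
  exists w, In w (allwords k) /\ Rabs (x - Cw p r q w) <= c ^ k.
Proof.
  intros Hp Hr Hq Hpc Hrc Hqc HK Hx.
  destruct (K_words p r q K HK k x Hx) as [w [Hl [Hw [z [Hz ->]]]]].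
  exists w. split. now apply allwords_in.
  unfold Cw. rewrite app_diff, Rabs_mult.
  pose proof (wmap_scale p r q w c ltac:(lra) ltac:(lra) ltac:(lra) Hw). rewrite Hl in H.
  pose proof (K01 p r q K Hp Hr ltac:(lra) HK z Hz).
  rewrite (Rabs_pos_eq z) by lra. pose proof (Rabs_pos (fst (wmap p r q w))). nra.
Qed.

Lemma Rabs_le_between x a : Rabs x <= a -> - a <= x <= a.
Proof. intros H. pose proof (Rle_abs x). pose proof (Rle_abs (-x)). rewrite Rabs_Ropp in *. lra. Qed.

Lemma absprod s a D : 0 <= s -> -D <= a <= D -> -(s*D) <= s*a <= s*D.
Proof. intros. split; nra. Qed.

Lemma diam (P R D q1 q2 x1 x2 u1 u2 C1 C2 E1 E2 qM : R) :
  0 < P -> 0 <= R -> 0 <= D <= 1/36 -> 0 < q1 <= q2 -> q2 <= qM <= 1/36 ->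
  1/3 <= x1 <= 1 -> 1/3 <= x2 <= 1 -> 1/3 <= u1 <= 1 -> 1/3 <= u2 <= 1 ->
  q1 * P * x1 = R * u1 -> q2 * P * x2 = R * u2 ->
  Rabs (x1 - C1) <= D -> Rabs (x2 - C2) <= D -> Rabs ((1 - u1) - E1) <= D -> Rabs ((1 - u2) - E2) <= D ->
  Rabs (C2 - C1) <= 2 * Rabs (q2 - q1) -> Rabs (E2 - E1) <= 2 * Rabs (q2 - q1) ->
  q2 - q1 <= 3 * D.
Proof.
  intros HP HR HD Hq12 HqM Hx1 Hx2 Hu1 Hu2 Eq1 Eq2 H1 H2 H3 H4 HC HE.
  rewrite (Rabs_pos_eq (q2 - q1)) in HC, HE by lra.
  apply Rabs_le_between in H1, H2, H3, H4, HC, HE.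
  assert (q1 * x1 <= 1/36) by nra.
  assert (q1 * P * x1 <= P / 36) by nra.
  assert (R * (1/3) <= R * u1) by nra.
  assert (HRP : R <= P / 12) by nra.
  set (G1 := q1 * P * C1 - R * (1 - E1)). set (G2 := q2 * P * C2 - R * (1 - E2)).
  assert (HG1 : Rabs G1 <= P * D / 9).
  { unfold G1. replace (q1 * P * C1 - R * (1 - E1)) with (- (q1 * P) * (x1 - C1) + R * ((1 - u1) - E1) * (-1))
      by (replace (q1 * P * C1) with (q1*P*x1 - q1*P*(x1-C1)) by ring; rewrite Eq1; ring).
    pose proof (absprod (q1*P) _ _ ltac:(nra) H1).
    pose proof (absprod R _ _ HR H3).
    assert (q1*P*D <= P*D/36) by nra. assert (R*D <= P*D/12) by nra.
    apply Rabs_le. split; nra. }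
  assert (HG2 : Rabs G2 <= P * D / 9).
  { unfold G2. replace (q2 * P * C2 - R * (1 - E2)) with (- (q2 * P) * (x2 - C2) + R * ((1 - u2) - E2) * (-1))
      by (replace (q2 * P * C2) with (q2*P*x2 - q2*P*(x2-C2)) by ring; rewrite Eq2; ring).
    pose proof (absprod (q2*P) _ _ ltac:(nra) H2).
    pose proof (absprod R _ _ HR H4).
    assert (q2*P*D <= P*D/36) by nra. assert (R*D <= P*D/12) by nra.
    apply Rabs_le. split; nra. }
  assert (HGd : P * (q2 - q1) / 12 <= G2 - G1).
  { unfold G1, G2.
    replace (q2 * P * C2 - R * (1 - E2) - (q1 * P * C1 - R * (1 - E1)))
      with (P * ((q2 - q1) * C2 + q1 * (C2 - C1)) + R * (E2 - E1)) by ring.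
    assert (C2 >= 1/3 - 1/36) by lra.
    assert (q1 * (C2 - C1) >= - (1/36) * (2 * (q2 - q1))) by nra.
    assert (R * (E2 - E1) >= - (P/12) * (2 * (q2 - q1))) by nra.
    assert ((q2 - q1) * C2 >= (q2 - q1) * (11/36)) by nra.
    assert (P * ((q2 - q1) * C2 + q1 * (C2 - C1)) >= P * ((q2 - q1) * (9/36))) by nra.
    lra. }
  apply Rabs_le_between in HG1, HG2. nra.
Qed.


Definition len (ab : R * R) := snd ab - fst ab.
Definition sumL (L : list (R * R)) := fold_right (fun ab s => len ab + s) 0 L.

Lemma sumL_app l1 l2 : sumL (l1 ++ l2) = sumL l1 + sumL l2.
Proof. induction l1; simpl. ring. rewrite IHl1. ring. Qed.

Lemma sum_zero K : sum_f_R0 (fun _ => 0) K = 0.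
Proof. induction K; simpl; auto. rewrite IHK. ring. Qed.

Lemma partial_le l : Forall (fun ab => fst ab <= snd ab) l -> forall K,
  sum_f_R0 (fun t => len (nth t l (0,0))) K <= sumL l.
Proof.
  induction 1 as [|a l Ha Hl IH]; intros K.
  - simpl. rewrite (sum_eq _ (fun _ => 0)). rewrite sum_zero; lra.
    intros i _. destruct i; unfold len; simpl; ring.
  - assert (0 <= len a) by (unfold len; lra).
    destruct K as [|K].
    + simpl. pose proof (IH 0%nat). simpl in H0.
      assert (0 <= sumL l).
      { clear -Hl. induction Hl; simpl. lra. unfold len at 1. lra. }
      lra.
    + rewrite decomp_sum by lia. simpl pred. simpl (nth 0 _ _).
      pose proof (IH K). simpl. lra.
Qed.

Section U.
Variable E : R -> Prop.
Variable F : nat -> R -> Prop.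
Hypothesis HE : forall x, E x -> exists i, F i x.
Hypothesis HF : forall i d, 0 < d -> exists L : list (R*R),
  Forall (fun ab => fst ab <= snd ab) L /\ sumL L <= d /\
  forall x, F i x -> exists ab, In ab L /\ fst ab < x < snd ab.

Lemma union_null : lebesgue_null E.
Proof.
  intros eps Heps.
  assert (Hch : forall i, {L : list (R*R) | Forall (fun ab => fst ab <= snd ab) L /\ sumL L <= eps / 2^(S i) /\
     forall x, F i x -> exists ab, In ab L /\ fst ab < x < snd ab}).
  { intro i. apply constructive_indefinite_description. apply HF.
    apply Rdiv_lt_0_compat; auto. apply pow_lt; lra. }
  set (L' := fun i => (0,0) :: proj1_sig (Hch i)).
  set (B := fun T => concat (map L' (seq 0 T))).
  assert (BS : forall T, B (S T) = B T ++ L' T).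
  { intro T. unfold B. rewrite seq_S, map_app, concat_app. simpl. rewrite app_nil_r. reflexivity. }
  assert (Blen : forall T, (T <= length (B T))%nat).
  { induction T. lia. rewrite BS, length_app. unfold L'. simpl. lia. }
  assert (Bpre : forall T T', (T <= T')%nat -> exists rest, B T' = B T ++ rest).
  { intros T T' H. induction H. exists []. now rewrite app_nil_r.
    destruct IHle as [rest Hr]. exists (rest ++ L' m). rewrite BS, Hr, app_assoc. reflexivity. }
  assert (Bfa : forall T, Forall (fun ab => fst ab <= snd ab) (B T)).
  { induction T. constructor. rewrite BS. apply Forall_app. split; auto.
    unfold L'. constructor. simpl; lra. destruct (proj2_sig (Hch T)) as [H _]. exact H. }
  assert (Bsum : forall T, sumL (B T) <= eps - eps / 2^T).
  { induction T as [|T IHT]. simpl. unfold B; simpl. lra.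
    rewrite BS, sumL_app. unfold L'. simpl. destruct (proj2_sig (Hch T)) as [_ [Hs _]].
    unfold len at 1; simpl. simpl in Hs.
    assert (Hz : 0 < 2^T) by (apply pow_lt; lra).
    replace (eps / (2 * 2^T)) with (eps / 2^T / 2) in * by (field; lra).
    assert (eps / (2 * 2^T) = eps / 2^T / 2) by (field; lra).
    set (u := eps / 2^T) in *. lra. }
  assert (Bsum' : forall T, sumL (B T) <= eps).
  { intro T. pose proof (Bsum T). assert (0 < eps / 2^T) by (apply Rdiv_lt_0_compat; auto; apply pow_lt; lra). lra. }
  assert (Bnth : forall t T, (t < T)%nat -> nth t (B T) (0,0) = nth t (B (S t)) (0,0)).
  { intros t T H. destruct (Bpre (S t) T ltac:(lia)) as [rest ->]. apply app_nth1.
    pose proof (Blen (S t)). lia. }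
  exists (fun t => fst (nth t (B (S t)) (0,0))), (fun t => snd (nth t (B (S t)) (0,0))).
  repeat split.
  - intro t. pose proof (Blen (S t)). specialize (Bfa (S t)). rewrite Forall_forall in Bfa.
    apply Bfa. apply nth_In. lia.
  - intros K. eapply Rle_trans; [|apply (Bsum' (S K))].
    rewrite (sum_eq _ (fun t => len (nth t (B (S K)) (0,0)))).
    apply partial_le. apply Bfa.
    intros t Ht. rewrite (Bnth t (S K)) by lia. reflexivity.
  - intros x Hx. destruct (HE x Hx) as [i Hi].
    destruct (proj2_sig (Hch i)) as [_ [_ Hc]]. destruct (Hc x Hi) as [ab [Hab Hx']].
    assert (Hin : In ab (B (S i))).
    { rewrite BS. apply in_or_app. right. unfold L'. right. exact Hab. }
    destruct (In_nth _ _ (0,0) Hin) as [t [Ht Et]].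
    exists t. destruct (le_lt_dec t i) as [Hti|Hti].
    + rewrite <- (Bnth t (S i)) by lia. rewrite Et. exact Hx'.
    + destruct (Bpre (S i) (S t) ltac:(lia)) as [rest Hr]. rewrite Hr, app_nth1 by exact Ht.
      rewrite Et. exact Hx'.
Qed.
End U.


Definition qM (N : nat) := /36 - /(36 * (INR N + 2)).
Definition cN p r N := Rmax (Rmax p r) (qM N).

Lemma qM_bounds N : 0 < qM N < 1/36.
Proof.
  unfold qM. pose proof (pos_INR N).
  assert (0 < /(36 * (INR N + 2))) by (apply Rinv_0_lt_compat; lra).
  assert (/(36 * (INR N + 2)) <= /72) by (apply Rinv_le_contravar; lra).
  lra.
Qed.

Lemma cN_bounds p r N : 0 < p < 1/36 -> 0 < r < 1/36 ->
  p <= cN p r N /\ r <= cN p r N /\ qM N <= cN p r N /\ cN p r N < 1/36.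
Proof.
  intros Hp Hr. pose proof (qM_bounds N). unfold cN.
  pose proof (Rmax_l (Rmax p r) (qM N)). pose proof (Rmax_r (Rmax p r) (qM N)).
  pose proof (Rmax_l p r). pose proof (Rmax_r p r).
  repeat split; try lra.
  apply Rmax_lub_lt; [apply Rmax_lub_lt|]; lra.
Qed.

Lemma pow_le1 x k : 0 <= x <= 1 -> x ^ k <= 1.
Proof. intros H. induction k; simpl. lra. pose proof (pow_le x k ltac:(lra)). nra. Qed.

Definition Bpair p r N n m k (w w' : list nat) (q : R) :=
  0 < q <= qM N /\ exists x u, 1/3 <= x <= 1 /\ 1/3 <= u <= 1 /\ q * p^n * x = r^(m+1) * u /\
   Rabs (x - Cw p r q w) <= (cN p r N)^k /\ Rabs ((1 - u) - Cw p r q w') <= (cN p r N)^k.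

Definition Fset p r N n m (q : R) :=
  0 < q <= qM N /\ exists x u, 1/3 <= x <= 1 /\ 1/3 <= u <= 1 /\ q * p^n * x = r^(m+1) * u /\
   forall k, exists w w', In w (allwords k) /\ In w' (allwords k) /\
   Rabs (x - Cw p r q w) <= (cN p r N)^k /\ Rabs ((1 - u) - Cw p r q w') <= (cN p r N)^k.

Lemma Bpair_diam p r N n m k w w' q1 q2 : 0 < p < 1/36 -> 0 < r < 1/36 -> (1 <= k)%nat ->
  Bpair p r N n m k w w' q1 -> Bpair p r N n m k w w' q2 -> q1 <= q2 -> q2 - q1 <= 3 * (cN p r N)^k.
Proof.
  intros Hp Hr Hk [Hq1 [x1 [u1 [Hx1 [Hu1 [E1 [A1 B1]]]]]]] [Hq2 [x2 [u2 [Hx2 [Hu2 [E2 [A2 B2]]]]]]] H12.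
  pose proof (cN_bounds p r N Hp Hr) as [Hpc [Hrc [Hqc Hc]]]. pose proof (qM_bounds N).
  assert (HD : 0 <= (cN p r N)^k <= 1/36).
  { split. apply pow_le; lra. destruct k; [lia|]. simpl.
    assert (cN p r N ^ k <= 1) by (apply pow_le1; lra). pose proof (pow_le (cN p r N) k ltac:(lra)). nra. }
  eapply (diam (p^n) (r^(m+1)) _ q1 q2 x1 x2 u1 u2 _ _ _ _ (qM N)); eauto.
  - apply pow_lt; lra.
  - apply pow_le; lra.
  - lra.
  - lra.
  - apply Cw_lip; lra.
  - apply Cw_lip; lra.
Qed.

Lemma sumL_map {A} (f : A -> R * R) (l : list A) d :
  (forall x, len (f x) = d) -> sumL (map f l) = INR (length l) * d.
Proof.
  intros H. induction l; simpl. ring. rewrite IHl, H. destruct (length l); simpl; ring.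
Qed.

Lemma Fcover p r N n m : 0 < p < 1/36 -> 0 < r < 1/36 -> forall d, 0 < d ->
  exists L : list (R*R), Forall (fun ab => fst ab <= snd ab) L /\ sumL L <= d /\
  forall x, Fset p r N n m x -> exists ab, In ab L /\ fst ab < x < snd ab.
Proof.
  intros Hp Hr d Hd.
  pose proof (cN_bounds p r N Hp Hr) as [Hpc [Hrc [Hqc Hc]]]. pose proof (qM_bounds N).
  set (c := cN p r N) in *.
  destruct (pow_lt_1_zero (36 * c) ltac:(rewrite Rabs_pos_eq; lra) (d/8) ltac:(lra)) as [k0 Hk0].
  set (k := S k0).
  specialize (Hk0 k ltac:(unfold k; lia)). rewrite Rabs_pos_eq in Hk0 by (apply pow_le; lra).
  set (D := c^k).
  assert (HD : 0 < D) by (apply pow_lt; lra).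
  set (ctr := fun ww : list nat * list nat => epsilon (inhabits 0) (Bpair p r N n m k (fst ww) (snd ww))).
  exists (map (fun ww => (ctr ww - 4 * D, ctr ww + 4 * D)) (list_prod (allwords k) (allwords k))).
  repeat split.
  - apply Forall_forall. intros ab Hab. apply in_map_iff in Hab. destruct Hab as [ww [<- _]]. simpl. lra.
  - rewrite (sumL_map _ _ (8 * D)) by (intros; unfold len; simpl; ring).
    rewrite length_prod, allwords_len, mult_INR, pow_INR. replace (INR 6) with 6 by (simpl; ring).
    unfold D. rewrite Rpow_mult_distr in Hk0.
    replace (6 ^ k * 6 ^ k * (8 * c ^ k)) with (8 * ((6 * 6) ^ k * c ^ k)) by (rewrite Rpow_mult_distr; ring).
    replace (6 * 6) with 36 by ring. lra.
  - intros q [Hq [x [u [Hx [Hu [E Hw]]]]]].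
    destruct (Hw k) as [w [w' [Hin [Hin' [A B]]]]].
    assert (Hb : Bpair p r N n m k w w' q) by (split; auto; exists x, u; auto).
    pose proof (epsilon_spec (inhabits 0) (Bpair p r N n m k w w') (ex_intro _ q Hb)) as Hb0.
    exists (ctr (w, w') - 4 * D, ctr (w, w') + 4 * D). split.
    + apply (in_map (fun ww => (ctr ww - 4 * D, ctr ww + 4 * D))). apply in_prod; auto.
    + unfold ctr; simpl. set (q0 := epsilon (inhabits 0) (Bpair p r N n m k w w')) in *.
      destruct (Rle_or_lt q q0).
      * pose proof (Bpair_diam p r N n m k w w' q q0 Hp Hr ltac:(unfold k; lia) Hb Hb0 H0). simpl; fold c in H1; fold D in H1; lra.
      * pose proof (Bpair_diam p r N n m k w w' q0 q Hp Hr ltac:(unfold k; lia) Hb0 Hb ltac:(lra)). simpl; fold c in H1; fold D in H1; lra.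
Qed.

Lemma find_N q : 0 < q < 1/36 -> exists N, q <= qM N.
Proof.
  intros Hq. destruct (nat_floor (/(1 - 36*q)) ltac:(apply Rlt_le, Rinv_0_lt_compat; lra)) as [N [_ HN]].
  exists N. unfold qM.
  assert (/(36 * (INR N + 2)) <= (1 - 36*q)/36).
  { replace ((1 - 36 * q)/36) with (/(36 * /(1 - 36*q))) by (field; lra).
    apply Rinv_le_contravar. apply Rmult_lt_0_compat; [lra|apply Rinv_0_lt_compat; lra]. lra. }
  lra.
Qed.

Theorem mainTheorem14 (p r : R) :
  0 < p < 1/36 -> 0 < r < 1/36 ->
  ~ (exists m n : Z, n <> 0%Z /\ ln p / ln r = IZR m / IZR n) ->
  ae_on 0 (1/36) (fun q =>
    forall K : R -> Prop, is_attractor (sysS p r q) K ->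
      (forall y, (piece (sysS p r q) K 2 y /\ piece (sysS p r q) K 3 y) <-> y = 1/2) /\
      (forall i j : nat, (i < 6)%nat -> (j < 6)%nat -> i <> j ->
         ~ ((i = 2%nat /\ j = 3%nat) \/ (i = 3%nat /\ j = 2%nat)) ->
         forall y, ~ (piece (sysS p r q) K i y /\ piece (sysS p r q) K j y)) /\
      ~ WSP (sysS p r q)).
Proof.
  intros Hp Hr Hirr. unfold ae_on.
  apply (union_null _ (fun i => let '(N, nm) := Cantor.of_nat i in let '(n, m) := Cantor.of_nat nm in
                                 Fset p r N n m)).
  - intros q [Hq Hn].
    apply not_all_ex_not in Hn. destruct Hn as [K Hn].
    apply imply_to_and in Hn. destruct Hn as [HK Hn].
    assert (Hy : exists y, piece (sysS p r q) K 2 y /\ piece (sysS p r q) K 3 y /\ y <> 1/2).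
    { apply NNPP. intro Hc. apply Hn. split; [|split].
      - intro y. split.
        + intros [H2 H3]. apply NNPP. intro Hne. apply Hc. exists y. auto.
        + intros ->. apply part_a; auto.
      - apply part_b; auto.
      - apply notWSP; auto; lra. }
    destruct Hy as [y [H2 [H3 Hne]]].
    destruct (bad_decomp p r q Hp Hr Hq K HK y H2 H3 Hne) as [n [m [x [u [Hx [Hu [E [HKx HKu]]]]]]]].
    destruct (find_N q Hq) as [N HN].
    exists (Cantor.to_nat (N, Cantor.to_nat (n, m))).
    rewrite Cantor.cancel_of_to, Cantor.cancel_of_to.
    pose proof (cN_bounds p r N Hp Hr) as [Hpc [Hrc [Hqc Hc]]].
    unfold Fset. split; [lra|]. exists x, u. split; [auto|split; [auto|split; [auto|]]].
    intro k.
    destruct (near_word p r q K (cN p r N) k x Hp Hr Hq Hpc Hrc ltac:(lra) HK HKx) as [w [Hw Aw]].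
    destruct (near_word p r q K (cN p r N) k (1 - u) Hp Hr Hq Hpc Hrc ltac:(lra) HK HKu) as [w' [Hw' Aw']].
    exists w, w'. auto.
  - intros i d Hd. destruct (Cantor.of_nat i) as [N nm]. destruct (Cantor.of_nat nm) as [n m].
    apply Fcover; auto.
Qed.
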